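(* Let $|x_1\rangle,\dots,|x_n\rangle\in\mathbb{C}^d$ be such that (i) they are linearly independent over $\mathbb{R}$, and (ii) $\langle x_j|x_k\rangle\in\mathbb{R}$ for all $j,k=1,\dots,n$. Then $n\le d$.
   Context: $\langle x|y\rangle=\sum_ix_i^*y_i$ denotes the standard Hermitian inner product on $\mathbb{C}^d$. *)

(* Defs.v *)
From HB Require Import structures.
From mathcomp Require Import all_boot all_order all_algebra.
From mathcomp Require Import complex.
Set Implicit Arguments. Unset Strict Implicit. Unset Printing Implicit Defensive.
Import Order.TTheory GRing.Theory Num.Theory.
Local Open Scope ring_scope.

(* Vectors in C^d are modelled as functions 'I_d -> R[i], where R[i] is the
   complex numbers over a real closed field R (e.g. the reals). *)

Definition hinner (R : rcfType) (d : nat) (x y : 'I_d -> R[i]) : R[i] :=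
  \sum_(i < d) (x i)^* * y i.

Definition R_lin_indep (R : rcfType) (d n : nat) (x : 'I_n -> 'I_d -> R[i]) : Prop :=
  forall c : 'I_n -> R,
    (forall i : 'I_d, \sum_(j < n) (((c j)%:C)%C * x j i) = 0) ->
    forall j, c j = 0.

(* Main.v *)
Require Import Defs.
From mathcomp Require Import all_boot all_order all_algebra.
From mathcomp Require Import complex.
Import Order.TTheory GRing.Theory Num.Theory.
Local Open Scope ring_scope.

Section S.
Variables (R : rcfType) (d n : nat) (x : 'I_n -> 'I_d -> R[i]).

Definition comb (a : 'I_n -> R) : 'I_d -> R[i] :=
  fun i => \sum_(j < n) ((a j)%:C)%C * x j i.

Lemma realC (r : R) : ((r%:C)%C : R[i]) \is Num.real.
Proof. by apply/complex_realP; exists r. Qed.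

Lemma hinner_combl a y :
  hinner (comb a) y = \sum_(j < n) ((a j)%:C)%C * hinner (x j) y.
Proof.
rewrite /hinner /comb.
under eq_bigr => i _ do rewrite rmorph_sum mulr_suml.
rewrite exchange_big /=; apply: eq_bigr => j _.
rewrite mulr_sumr; apply: eq_bigr => i _.
by rewrite rmorphM /= (conj_Creal (realC _)) mulrA.
Qed.

Lemma hinner_combr a y :
  hinner y (comb a) = \sum_(j < n) ((a j)%:C)%C * hinner y (x j).
Proof.
rewrite /hinner /comb.
under eq_bigr => i _ do rewrite mulr_sumr.
rewrite exchange_big /=; apply: eq_bigr => j _.
rewrite mulr_sumr; apply: eq_bigr => i _.
by rewrite mulrCA.
Qed.

Hypothesis hr : forall j k : 'I_n, hinner (x j) (x k) \is Num.real.

Lemma real_comb a b : hinner (comb a) (comb b) \is Num.real.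
Proof.
rewrite hinner_combl; apply: rpred_sum => j _; apply: rpredM; first exact: realC.
rewrite hinner_combr; apply: rpred_sum => k _; apply: rpredM; first exact: realC.
exact: hr.
Qed.

Lemma hinner_self_eq0 (u : 'I_d -> R[i]) : hinner u u = 0 -> forall i, u i = 0.
Proof.
move=> h i; apply/eqP; rewrite -normr_eq0 -sqrf_eq0 normCKC; apply/eqP.
move: h; rewrite /hinner => /psumr_eq0P; apply => // k _.
by rewrite -normCKC exprn_ge0.
Qed.

Lemma key (c : 'I_n -> R[i]) : R_lin_indep x ->
  (forall i, \sum_(j < n) c j * x j i = 0) -> forall j, c j = 0.
Proof.
move=> hli hc.
pose a j := complex.Re (c j); pose b j := complex.Im (c j).
have hsplit : forall i, comb a i + 'i%C * comb b i = 0.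
  move=> i; rewrite -(hc i) /comb mulr_sumr -big_split /=; apply: eq_bigr => j _.
  by rewrite mulrA -mulrDl -complexE.
have hu : forall i, comb a i = - ('i%C * comb b i).
  by move=> i; apply/eqP; rewrite -addr_eq0 hsplit.
have e1 : hinner (comb a) (comb a) = - 'i%C * hinner (comb a) (comb b).
  rewrite /hinner mulr_sumr; apply: eq_bigr => i _.
  by rewrite {2}hu mulrN mulNr mulrCA.
have [k1 ek1] := complex_realP _ (real_comb a a).
have [k2 ek2] := complex_realP _ (real_comb a b).
rewrite ek1 ek2 in e1.
move: (congr1 (@complex.Re R) e1) => /= k10. rewrite ?oppr0 ?mul0r ?mulr0 ?oppr0 ?subr0 ?addr0 ?oppr0 in k10.
have ua : forall i, comb a i = 0 by apply: hinner_self_eq0; rewrite ek1 k10.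
have ub : forall i, comb b i = 0.
  move=> i; have := hu i; rewrite ua => /eqP; rewrite eq_sym oppr_eq0 mulf_eq0.
  have inz : ('i%C : R[i]) != 0 by rewrite eq_complex /= oner_eq0 andbF.
  by rewrite (negbTE inz) /= => /eqP.
have a0 := hli a ua; have b0 := hli b ub.
by move=> j; rewrite (complexE (c j)) -/(a j) -/(b j) a0 b0 mulr0 addr0.
Qed.
End S.

Theorem lemma4p2 (R : rcfType) (d n : nat) (x : 'I_n -> 'I_d -> R[i]) :
  R_lin_indep x ->
  (forall j k : 'I_n, hinner (x j) (x k) \is Num.real) ->
  (n <= d)%N.
Proof.
move=> hli hr.
pose X : 'M[R[i]]_(n, d) := \matrix_(j, i) x j i.
have rf : row_free X.
  rewrite -kermx_eq0; apply/negPn/negP => /rowV0Pn [v /sub_kermxP hv].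
  apply/negP; rewrite negbK; apply/eqP/rowP => j; rewrite mxE.
  move: j; apply: (@key _ _ _ x hr (fun k => v 0 k) hli) => i.
  have := congr1 (fun M : 'M[R[i]]_(1, d) => M 0 i) hv; rewrite !mxE => h; apply: etrans h.
  by apply: eq_bigr => k _; rewrite mxE.
by rewrite -(eqP rf) rank_leq_col.
Qed.
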